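(* Let $V$ be a finite set of variables and let $p$ be a probability distribution over $V$ faithful to an LWF chain graph $G$ with vertex set $V$, with all conditional independence queries answered correctly according to $p$. Then the graph $H^*$ produced at the end of the PC-like algorithm PC4LWF (after skeleton recovery, complex recovery and the pattern step) has the same adjacencies and the same minimal complexes as $G$.
   Context: An LWF chain graph (CG) is a graph on a finite vertex set with directed ($\to$) and undirected ($-$) edges, at most one edge between two vertices, and no partially directed cycle (a cycle $v_1,\dots,v_n,v_{n+1}\equiv v_1$, $n\ge3$, of distinct vertices with each step $v_i-v_{i+1}$ or $v_i\to v_{i+1}$ and at least one step directed). Chain components are the connected components after deleting directed edges. $bd(A)$ is the set of parents or neighbours of vertices of $A$ outside $A$; $An(A)$ is the smallest set $B\supseteq A$ with $bd(b)\subseteq B$ for all $b\in B$. The moral graph $G^m$ joins $\alpha,\beta$ iff they are adjacent in $G$ or $\alpha\to\gamma_1$, $\beta\to\gamma_2$ for some $\gamma_1,\gamma_2$ in one chain component. For disjoint $A,B,S$, $S$ c-separates $A$ from $B$ if it separates them in $(G_{An(A\cup B\cup S)})^m$. $p$ is faithful to $G$ if $A\perp\!\!\!\perp B\mid S$ in $p$ iff $S$ c-separates $A$ from $B$ in $G$. A minimal complex is an induced subgraph of the form $a\to v_1-\cdots-v_r\gets b$ ($r\ge1$). PC4LWF. Skeleton recovery: let $H$ be the complete undirected graph on $V$; for $i=0,\dots,|V|-2$, while possible select an ordered pair $(u,v)$ adjacent in the current $H$ with $|ad_H(u)\setminus\{v\}|\ge i$ ($ad_H$ = current adjacency sets); if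 some $S\subseteq ad_H(u)\setminus\{v\}$ with $|S|=i$ satisfies $u\perp\!\!\!\perp v\mid S$, set $S_{uv}=S_{vu}=S$ and remove $u-v$. Complex recovery: set $H^*=H$; for each pair $\{u,v\}$ non-adjacent in $H$ and each edge $u-w$ in $H^*$, if $u\not\perp\!\!\!\perp v\mid S_{uv}\cup\{w\}$, orient $u-w$ as $u\to w$. Pattern step: for each pair of arrows $u_1\to w_1$, $u_2\to w_2$ in $H^*$ with $u_1\ne u_2$, label both as complex arrows if there is an undirected path in $H^*$ from $w_1$ to $w_2$ none of whose intermediate vertices is adjacent to $u_1$ or $u_2$; after all pairs are examined, make every unlabeled arrow undirected. *)

(* Defs.v *)
From Stdlib Require Import ClassicalEpsilon.
From mathcomp Require Import all_boot.
Set Implicit Arguments. Unset Strict Implicit. Unset Printing Implicit Defensive.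

Section ChainGraphs.
Variable T : finType.

(** A graph with directed edges [d x y] (x -> y) and undirected edges [u x y] (x - y). *)
Definition adjacent (d u : rel T) (x y : T) : bool := [|| d x y, d y x | u x y].

Definition cyc_steps (p : seq T) : seq (T * T) := zip p (rot 1 p).

Definition pd_cycle (d u : rel T) (p : seq T) : bool :=
  [&& 3 <= size p, uniq p,
      all (fun e => d e.1 e.2 || u e.1 e.2) (cyc_steps p)
    & has (fun e => d e.1 e.2) (cyc_steps p)].

Definition is_LWF_CG (d u : rel T) : Prop :=
  [/\ (forall x, ~~ d x x), (forall x, ~~ u x x), (forall x y, u x y = u y x),
      (forall x y, ~~ (d x y && d y x) /\ ~~ (d x y && u x y))
    & (forall p, ~~ pd_cycle d u p)].

Definition bd (d u : rel T) (A : {set T}) : {set T} :=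
  [set x | (x \notin A) && [exists a in A, d x a || u x a]].

Definition An (d u : rel T) (A : {set T}) : {set T} :=
  [set x | [forall B : {set T},
     ((A \subset B) && [forall b in B, bd d u [set b] \subset B]) ==> (x \in B)]].

Definition same_comp (u : rel T) (W : {set T}) (x y : T) : bool :=
  connect [rel a b | [&& a \in W, b \in W & u a b]] x y.

Definition moral (d u : rel T) (W : {set T}) (x y : T) : bool :=
  [&& x \in W, y \in W, x != y &
     adjacent d u x y ||
     [exists g1, exists g2, [&& g1 \in W, g2 \in W, d x g1, d y g2 & same_comp u W g1 g2]]].

Definition c_separates (d u : rel T) (A B S : {set T}) : Prop :=
  let W := An d u (A :|: B :|: S) in
  forall a b, a \in A -> b \in B ->
    ~~ connect [rel x y | [&& x \in W :\: S, y \in W :\: S & moral d u W x y]] a b.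

(** minimal complex a -> v1 - ... - vr <- b as an induced subgraph *)
Definition consec (vs : seq T) (x y : T) : bool :=
  has (fun e => (e == (x, y)) || (e == (y, x))) (zip vs (behead vs)).

Definition min_complex (d u : rel T) (a b : T) (vs : seq T) : Prop :=
  [/\ vs != [::], uniq (a :: b :: vs) &
      forall x y, x \in a :: b :: vs -> y \in a :: b :: vs ->
        d x y = ((x == a) && (y == head a vs)) || ((x == b) && (y == last b vs))
        /\ u x y = consec vs x y].

(** CI oracle: CI A B S  means  A _||_ B | S  in p. *)
Definition ci_oracle := {set T} -> {set T} -> {set T} -> Prop.

Definition adj_set (H : rel T) (x : T) : {set T} := [set w | H x w].

Definition remove_edge (H : rel T) (u v : T) : rel T :=
  fun x y => H x y && ([set x; y] != [set u; v]).

Definition set_sep (sep : T -> T -> {set T}) (u v : T) (S : {set T}) :=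
  fun x y => if [set x; y] == [set u; v] then S else sep x y.

Definition skstate := (rel T * (T -> T -> {set T}))%type.

Inductive skel_step (CI : ci_oracle) (i : nat) : skstate -> skstate -> Prop :=
| SkStep (H : rel T) sep u v (S : {set T}) :
    H u v -> i <= #|adj_set H u :\ v| ->
    S \subset adj_set H u :\ v -> #|S| = i -> CI [set u] [set v] S ->
    skel_step CI i (H, sep) (remove_edge H u v, set_sep sep u v S).

Inductive rtc (R : skstate -> skstate -> Prop) : skstate -> skstate -> Prop :=
| rtc_refl s : rtc R s s
| rtc_step s s' s'' : R s s' -> rtc R s' s'' -> rtc R s s''.

Definition skel_level (CI : ci_oracle) (i : nat) (s s' : skstate) : Prop :=
  rtc (skel_step CI i) s s' /\ ~ (exists s'', skel_step CI i s' s'').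

Fixpoint skel_upto (CI : ci_oracle) (n : nat) (s0 s : skstate) : Prop :=
  match n with
  | 0 => s = s0
  | n'.+1 => exists s', skel_upto CI n' s0 s' /\ skel_level CI n' s' s
  end.

Definition complete_graph : rel T := fun x y => x != y.

(** skeleton recovery: levels i = 0, ..., |V|-2, starting from the complete graph *)
Definition skeleton_run (CI : ci_oracle) (H : rel T) (sep : T -> T -> {set T}) : Prop :=
  skel_upto CI #|T|.-1 (complete_graph, fun _ _ => set0) (H, sep).

(** complex recovery: the triples (u,v,w), u,v non-adjacent in H, u-w in H,
    processed once each, in an arbitrary order [ord] *)
Definition cr_order (H : rel T) (ord : seq (T * T * T)) : Prop :=
  uniq ord /\ forall t : T * T * T,
    t \in ord = [&& t.1.1 != t.1.2, ~~ H t.1.1 t.1.2 & H t.1.1 t.2].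

Definition add_arrow (A : rel T) (u w : T) : rel T :=
  fun x y => A x y || ((x == u) && (y == w)).

(** A = set of arrows of H* ; u - w is undirected in H* iff H u w, ~A u w, ~A w u *)
Inductive cr_run (CI : ci_oracle) (H : rel T) (sep : T -> T -> {set T})
  : rel T -> seq (T * T * T) -> rel T -> Prop :=
| CRnil A : cr_run CI H sep A [::] A
| CRorient A u v w l A' :
    H u w -> ~~ A u w -> ~~ A w u ->
    ~ CI [set u] [set v] (sep u v :|: [set w]) ->
    cr_run CI H sep (add_arrow A u w) l A' ->
    cr_run CI H sep A ((u, v, w) :: l) A'
| CRskip A u v w l A' :
    ~ (H u w /\ ~~ A u w /\ ~~ A w u /\ ~ CI [set u] [set v] (sep u v :|: [set w])) ->
    cr_run CI H sep A l A' ->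
    cr_run CI H sep A ((u, v, w) :: l) A'.

Definition undir (H A : rel T) : rel T := fun x y => [&& H x y, ~~ A x y & ~~ A y x].

(** undirected path in H* from w1 to w2, none of whose intermediate vertices is
    adjacent (in H*, i.e. in H) to u1 or u2 *)
Definition good_upath (H A : rel T) (u1 u2 w1 w2 : T) : Prop :=
  exists p : seq T,
    [&& path (undir H A) w1 p, last w1 p == w2, uniq (w1 :: p) &
        all (fun z => ~~ H u1 z && ~~ H u2 z) (take (size p).-1 p)].

(** complex arrows: members of a pair of arrows u1->w1, u2->w2 (u1 != u2) as above *)
Definition complex_arrow (H A : rel T) (x y : T) : Prop :=
  A x y /\ exists u' w', [/\ A u' w', x != u' &
      good_upath H A x u' y w' \/ good_upath H A u' x w' y].

(** final H*: unlabelled arrows made undirected *)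
Definition final_dir (H A : rel T) : rel T :=
  fun x y => A x y && (if excluded_middle_informative (complex_arrow H A x y) then true else false).
Definition final_und (H A : rel T) : rel T := undir H (final_dir H A).

End ChainGraphs.

(* Main.v *)
Require Import Defs.
From Stdlib Require Import ClassicalEpsilon.
From mathcomp Require Import all_boot.
From mathcomp Require Import zify.
Set Implicit Arguments. Unset Strict Implicit. Unset Printing Implicit Defensive.


Lemma scanR (P Q : nat -> bool) n : Q n -> (forall k, P k -> Q k -> False) ->
  forall i, i <= n -> P i -> exists i' j, [/\ i <= i', i' < j <= n, P i', Q j &
     forall k, i' < k < j -> ~~ P k && ~~ Q k].
Proof.
move=> Qn ex i.
have [m] := ubnP (n - i); elim: m i => // m IH i lt hi Pi.
have hE : exists k, [&& i < k, k <= n & P k || Q k].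
  exists n; rewrite leqnn Qn orbT andbT.
  case: (ltngtP i n) => // e; [lia | by subst; case: (ex _ Pi Qn)].
case: (ex_minnP hE) => j /and3P [ij jn PQj] jmin.
case/orP: PQj => [Pj | Qj].
  have lt' : n - j < m by lia.
  have [i' [j' [h1 h2 h4 h5 h6]]] := IH j lt' jn Pj.
  exists i', j'; split => //; lia.
exists i, j; split => //; first by rewrite ij jn.
move=> k /andP [ik kj]; rewrite -negb_or; apply/negP => hk.
have := jmin k; rewrite ik hk (leq_trans (ltnW kj) jn) => /(_ isT); lia.
Qed.

Lemma scanL (P Q : nat -> bool) n : P 0 -> (forall k, P k -> Q k -> False) ->
  forall j, j <= n -> Q j -> exists i j', [/\ j' <= j, i < j' <= n, P i, Q j' &
     forall k, i < k < j' -> ~~ P k && ~~ Q k].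
Proof.
move=> P0 ex j.
have [m] := ubnP j; elim: m j => // m IH j lt hj Qj.
have hE : exists k, (k < j) && (P k || Q k).
  exists 0; rewrite P0 andbT lt0n; apply/eqP => e; subst; case: (ex _ P0 Qj).
have ub : forall k, (k < j) && (P k || Q k) -> k <= j by move=> k /andP [/ltnW].
case: (ex_maxnP hE ub) => i /andP [ij PQi] imax.
case/orP: PQi => [Pi | Qi].
  exists i, j; split => //; first by rewrite ij hj.
  move=> k /andP [ik kj]; rewrite -negb_or; apply/negP => hk.
  have := imax k; rewrite kj hk => /(_ isT); lia.
have lt' : i < m by lia.
have [i' [j' [h1 h2 h4 h5 h6]]] := IH i lt' (leq_trans (ltnW ij) hj) Qi.
exists i', j'; split => //; lia.
Qed.

Lemma zip_nth (T : eqType) (s : seq T) x0 x y : (x, y) \in zip s (behead s) ->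
  exists2 k, k.+1 < size s & x = nth x0 s k /\ y = nth x0 s k.+1.
Proof.
elim: s => [|w s IH] //=; case: s IH => [|w' s] IH //=.
rewrite in_cons => /orP [/eqP [-> ->] | h]; first by exists 0.
by have [k hk [-> ->]] := IH h; exists k.+1.
Qed.

Lemma nth_in_zip (T : eqType) (s : seq T) x0 k : k.+1 < size s ->
  (nth x0 s k, nth x0 s k.+1) \in zip s (behead s).
Proof.
elim: s k => [|w s IH] k //=; case: s IH => [|w' s] IH //=.
case: k => [|k] h; rewrite in_cons; first by rewrite eqxx.
by rewrite IH ?orbT.
Qed.

Lemma path_map_iota (T : Type) (f : nat -> T) (e : rel T) s m :
  (forall k, s <= k < s + m -> e (f k) (f k.+1)) -> path e (f s) (map f (iota s.+1 m)).
Proof.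
elim: m s => [|m IH] s h //=; apply/andP; split.
  by apply: h; lia.
by apply: IH => k hk; apply: h; lia.
Qed.

Lemma last_map_iota (T : Type) (f : nat -> T) s m :
  last (f s) (map f (iota s.+1 m)) = f (s + m).
Proof. by elim: m s => [|m IH] s /=; rewrite ?addn0 // IH addSnnS. Qed.


Section Basic.
Variable T : finType.
Variables gd gu : rel T.
Hypothesis hCG : is_LWF_CG gd gu.

Definition stp : rel T := fun x y => gd x y || gu x y.
Local Notation adjG := (adjacent gd gu).
Local Notation An := (An gd gu).

Lemma irr_d x : gd x x = false.
Proof. by case: hCG => h _ _ _ _; apply/negbTE. Qed.
Lemma irr_u x : gu x x = false.
Proof. by case: hCG => _ h _ _ _; apply/negbTE. Qed.
Lemma sym_u x y : gu x y = gu y x.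
Proof. by case: hCG => _ _ h _ _. Qed.
Lemma dd x y : gd x y -> gd y x = false.
Proof. case: hCG => _ _ _ h _ dxy; have [h1 _] := h x y. by apply/negP=> dyx; rewrite dxy dyx in h1. Qed.
Lemma du x y : gd x y -> gu x y = false.
Proof. case: hCG => _ _ _ h _ dxy; have [_ h1] := h x y. by apply/negP=> u; rewrite dxy u in h1. Qed.
Lemma du' x y : gd x y -> gu y x = false.
Proof. by move=> h; rewrite sym_u du. Qed.

Lemma adj_sym x y : adjG x y = adjG y x.
Proof. by rewrite /adjacent sym_u orbCA. Qed.
Lemma adj_gd x y : gd x y -> adjG x y.
Proof. by rewrite /adjacent => ->. Qed.
Lemma adj_gu x y : gu x y -> adjG x y.
Proof. by rewrite /adjacent => ->; rewrite !orbT. Qed.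
Lemma adj_neq x y : adjG x y -> x != y.
Proof. by apply: contraTN => /eqP ->; rewrite /adjacent irr_d irr_u. Qed.

Lemma An_sub (X : {set T}) : X \subset An X.
Proof.
apply/subsetP => x xX; rewrite inE; apply/forallP => B; apply/implyP.
by case/andP => /subsetP sXB _; apply: sXB.
Qed.

Lemma An_closed (X : {set T}) b y : b \in An X -> stp y b -> y \in An X.
Proof.
rewrite !inE => /forallP hb syb; apply/forallP => B; apply/implyP => hB.
have bB := implyP (hb B) hB.
case/andP: hB => _ /forallP/(_ b)/implyP/(_ bB)/subsetP; apply.
rewrite inE; apply/andP; split.
  rewrite inE; apply: contraTN syb => /eqP ->; by rewrite /stp irr_d irr_u.
by apply/existsP; exists b; rewrite inE eqxx.
Qed.

Lemma An_walk (X : {set T}) x : x \in An X -> exists2 z, z \in X & connect stp x z.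
Proof.
rewrite inE => /forallP/(_ [set y | [exists z in X, connect stp y z]]) /implyP h.
have : x \in [set y | [exists z in X, connect stp y z]].
  apply: h; apply/andP; split.
    by apply/subsetP => y yX; rewrite inE; apply/existsP; exists y; rewrite yX connect0.
  apply/forallP => b; apply/implyP; rewrite inE => /existsP [z /andP [zX cbz]].
  apply/subsetP => y; rewrite /bd inE.
  move=> /andP [_ /existsP [a]]; rewrite inE => /andP [/eqP -> hy].
  rewrite inE; apply/existsP; exists z; rewrite zX /=.
  by apply: connect_trans cbz; apply: connect1.
by rewrite inE => /existsP [z /andP [zX c]]; exists z.
Qed.

Lemma An_mono (X Y : {set T}) : X \subset Y -> An X \subset An Y.
Proof.
move=> /subsetP sXY; apply/subsetP => x; rewrite !inE => /forallP h.
apply/forallP => B; apply/implyP => /andP [/subsetP sYB cl]; apply: (implyP (h B)).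
by rewrite cl andbT; apply/subsetP => z /sXY /sYB.
Qed.

Lemma An_eq (X Y : {set T}) : Y \subset X -> X \subset An Y -> An X = An Y.
Proof.
move=> sYX sXA; apply/eqP; rewrite eqEsubset (An_mono sYX) andbT.
apply/subsetP => x; rewrite !inE => /forallP h; apply/forallP => B; apply/implyP => hB.
apply: (implyP (h B)); rewrite (andP hB).2 andbT; apply/subsetP => z /(subsetP sXA).
by rewrite inE => /forallP/(_ B)/implyP; apply.
Qed.

Lemma zip_rcons_all (f : T * T -> bool) y p z :
  all f (zip (y :: p) (rcons p z)) = path (fun a b => f (a, b)) y (rcons p z).
Proof. by elim: p y => [|a p IH] y //=; rewrite IH. Qed.

Lemma zip_rcons_has (f : T * T -> bool) y p z :
  f (last y p, z) -> has f (zip (y :: p) (rcons p z)).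
Proof. by elim: p y => [|a p IH] y /= h; [rewrite h | rewrite IH ?orbT]. Qed.

Lemma no_dir_cycle x y : gd x y -> connect stp y x -> False.
Proof.
move=> dxy /connectP [p0 pth0 ex]; subst x.
move: dxy; case: (shortenP pth0) => p pth up _ dxy {pth0}.
have hc : pd_cycle gd gu (y :: p).
  rewrite /pd_cycle /cyc_steps rot1_cons up zip_rcons_all zip_rcons_has //.
  rewrite (@rcons_path _ stp) pth /= /stp dxy andbT.
  case: p pth up dxy => [|a [|b p]] //=.
    by rewrite irr_d.
  rewrite /stp andbT => /orP [h|h] _ dd'.
    by rewrite (dd dd') in h.
  by rewrite (du' dd') in h.
by case: hCG => _ _ _ _ /(_ (y :: p)); rewrite hc.
Qed.

Local Notation csep := (c_separates gd gu).

Lemma same_comp_sym (W : {set T}) x y : same_comp gu W x y -> same_comp gu W y x.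
Proof.
rewrite /same_comp (sym_connect_sym (e := [rel a b | [&& a \in W, b \in W & gu a b]])) //.
by move=> a b /=; rewrite sym_u andbCA.
Qed.

Lemma moral_sym1 (W : {set T}) x y : moral gd gu W x y -> moral gd gu W y x.
Proof.
case/and4P => xW yW nxy h; apply/and4P; split => //; first by rewrite eq_sym.
case/orP: h => [a | /existsP [g1 /existsP [g2 /and5P [g1W g2W d1 d2 sc]]]].
  by rewrite adj_sym a.
apply/orP; right; apply/existsP; exists g2; apply/existsP; exists g1.
by rewrite g2W g1W d2 d1 /= same_comp_sym.
Qed.

Lemma moral_sym (W : {set T}) x y : moral gd gu W x y = moral gd gu W y x.
Proof. by apply/idP/idP; apply: moral_sym1. Qed.

Lemma csep_sym (A B S : {set T}) : csep A B S -> csep B A S.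
Proof.
rewrite /c_separates => h a b aB bA; rewrite [B :|: A]setUC.
rewrite (sym_connect_sym (e := [rel x y | [&& x \in An (A :|: B :|: S) :\: S,
   y \in An (A :|: B :|: S) :\: S & moral gd gu (An (A :|: B :|: S)) x y]])).
  exact: h.
by move=> x y /=; rewrite moral_sym andbCA.
Qed.

Lemma adj_not_csep x y (S : {set T}) :
  adjG x y -> x \notin S -> y \notin S -> ~ csep [set x] [set y] S.
Proof.
move=> a xS yS h; have := h x y (set11 x) (set11 y); apply/negP/negPn.
have xW : x \in An ([set x] :|: [set y] :|: S).
  by apply: (subsetP (An_sub _)); rewrite !inE eqxx.
have yW : y \in An ([set x] :|: [set y] :|: S).
  by apply: (subsetP (An_sub _)); rewrite !inE eqxx orbT.
apply: connect1 => /=; rewrite !in_setD xS yS xW yW /= /moral xW yW adj_neq //=.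
by rewrite a.
Qed.

Lemma bd_in u z : (gd z u || gu z u) -> z \in bd gd gu [set u].
Proof.
move=> h; rewrite /bd inE; apply/andP; split.
  rewrite inE; apply: contraTN h => /eqP ->; by rewrite irr_d irr_u.
by apply/existsP; exists u; rewrite inE eqxx.
Qed.

Lemma sep_bd u v : u != v -> ~~ adjG u v -> (forall c, gd u c -> ~~ connect stp c v) ->
  csep [set u] [set v] (bd gd gu [set u]).
Proof.
move=> nuv nadj hc W a b; rewrite !in_set1 => /eqP -> /eqP ->.

have childW : forall c, gd u c -> c \in W -> False.
  move=> c duc /An_walk [z]; rewrite !inE => /orP[/orP[/eqP ->|/eqP ->]|zb] cz.
  - exact: no_dir_cycle duc cz.
  - by have := hc c duc; rewrite cz.
  - apply: (no_dir_cycle duc); apply: (connect_trans cz); apply: connect1.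
    move: zb => /andP [_ /existsP [a0]]; rewrite in_set1 => /andP [/eqP -> h]; exact: h.
apply/negP => /connectP [p pth ev]; case: p pth ev => [|z p] /=.
  by move=> _ e; rewrite e eqxx in nuv.
case/andP => /and3P [_ zW mo] _ _.
case/and4P: mo => _ zW' _ /orP [ad | ex].
  case/or3P: ad => [duz | dzu | uuz].
  - exact: childW duz zW'.
  - by move: zW; rewrite inE bd_in ?dzu.
  - by move: zW; rewrite inE bd_in // sym_u uuz orbT.
case/existsP: ex => g1 /existsP [g2 /and5P [g1W _ d1 _ _]].
exact: childW d1 g1W.
Qed.

Lemma sep_exists u v : u != v -> ~~ adjG u v ->
  csep [set u] [set v] (bd gd gu [set u]) \/ csep [set v] [set u] (bd gd gu [set v]).
Proof.
move=> nuv nadj.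
case: (boolP [forall c, gd u c ==> ~~ connect stp c v]) => [/forallP h | /forallPn [c]].
  by left; apply: sep_bd => // c /(implyP (h c)).
rewrite negb_imply negbK => /andP [duc ccv].
right; apply: sep_bd; [by rewrite eq_sym | by rewrite adj_sym |].
move=> c' dvc'; apply/negP => cc'u; apply: (no_dir_cycle duc).
apply: (connect_trans ccv); apply: connect_trans cc'u.
by apply: connect1; rewrite /stp dvc'.
Qed.

Variable CI : ci_oracle T.
Hypothesis hF : forall A B S : {set T},
      [disjoint A & B] -> [disjoint A & S] -> [disjoint B & S] ->
      (CI A B S <-> csep A B S).

Lemma CI_csep u v (S : {set T}) : u != v -> u \notin S -> v \notin S ->
  (CI [set u] [set v] S <-> csep [set u] [set v] S).
Proof.
move=> nuv uS vS; apply: hF; rewrite ?disjoints1 //.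
by rewrite in_set1.
Qed.

Lemma set2_eq (x y u v : T) : [set x; y] = [set u; v] -> (x = u /\ y = v) \/ (x = v /\ y = u).
Proof.
move=> e.
have hx : x \in [set u; v] by rewrite -e !inE eqxx.
have hy : y \in [set u; v] by rewrite -e !inE eqxx orbT.
have hu : u \in [set x; y] by rewrite e !inE eqxx.
have hv : v \in [set x; y] by rewrite e !inE eqxx orbT.
move: hx hy hu hv; rewrite !inE.
by do 4 (case/orP => /eqP ?); subst; auto.
Qed.

Definition Inv (s : skstate T) : Prop :=
 [/\ (forall x y, s.1 x y -> x != y), (forall x y, s.1 x y = s.1 y x),
     (forall x y, adjG x y -> s.1 x y) &
     (forall x y, x != y -> ~~ s.1 x y ->
        [/\ csep [set x] [set y] (s.2 x y), x \notin s.2 x y & y \notin s.2 x y])].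

Lemma step_inv i s s' : skel_step CI i s s' -> Inv s ->
  Inv s' /\ (forall x y, s'.1 x y -> s.1 x y).
Proof.
case=> H sep u v S huv _ sub _ ci [i1 i2 i3 i4] /=.
simpl in i1, i2, i3, i4.
have nuv := i1 _ _ huv.
have uS : u \notin S.
  by apply/negP => /(subsetP sub); rewrite !inE => /andP [_ huu]; move: (i1 _ _ huu); rewrite eqxx.
have vS : v \notin S.
  by apply: contraTN isT => /(subsetP sub); rewrite !inE eqxx.
have cs : csep [set u] [set v] S by apply/(CI_csep nuv uS vS).
have nadj : ~~ adjG u v by apply/negP => a; exact: (adj_not_csep a uS vS cs).
split; last by move=> x y /andP [].
split => /=.
- by move=> x y /andP [/i1].
- move=> x y; rewrite /remove_edge i2; congr (_ && _).
  by rewrite [[set y; x]]setUC.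
- move=> x y a; rewrite /remove_edge i3 //=; apply/negP => /eqP/set2_eq.
  by case=> [[? ?]|[? ?]]; subst; move: nadj; rewrite ?a // adj_sym a.
- move=> x y nxy; rewrite /set_sep /remove_edge; case: eqP => [/set2_eq e _ | _].
    by case: e => [[? ?]|[? ?]]; subst; split => //; apply: csep_sym.
  by rewrite andbT => /(i4 _ _ nxy).
Qed.

Lemma rtc_inv i s s' : rtc (skel_step CI i) s s' -> Inv s ->
  Inv s' /\ (forall x y, s'.1 x y -> s.1 x y).
Proof.
elim=> [s0 | s0 s1 s2 st _ IH] hi; first by split.
have [hi1 sub1] := step_inv st hi.
have [hi2 sub2] := IH hi1.
by split => // x y /sub2 /sub1.
Qed.

Lemma upto_inv n s0 s : skel_upto CI n s0 s -> Inv s0 ->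
  Inv s /\ (forall i, i < n -> exists s', [/\ Inv s', ~ (exists s'', skel_step CI i s' s'')
      & forall x y, s.1 x y -> s'.1 x y]).
Proof.
elim: n s => [|n IH] s /=; first by move=> -> h; split => //.
case=> s1 [hup [hrtc hno]] h0.
have [hi1 hsub1] := IH _ hup h0.
have [hi sub] := rtc_inv hrtc hi1.
split => // i; rewrite ltnS leq_eqVlt => /orP [/eqP -> | lti].
  by exists s.
have [s' [hs' hno' sub']] := hsub1 i lti.
by exists s'; split => // x y /sub /sub'.
Qed.

Lemma init_inv : Inv (@complete_graph T, fun _ _ => set0).
Proof.
split => /= [x y //| x y | x y /adj_neq // | x y h]; last by rewrite /complete_graph h.
by rewrite /complete_graph eq_sym.
Qed.

Lemma skeleton_ok H sep : skeleton_run CI H sep ->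
  Inv (H, sep) /\ (forall x y, H x y = adjG x y).
Proof.
move=> run; have [hi hsub] := upto_inv run init_inv.
split => // x y; apply/idP/idP; last by case: hi => _ _ h _; apply: h.
move=> hxy; apply/negPn/negP => nadj.
case: (hi) => i1 i2 i3 i4; simpl in i1, i2, i3, i4.
have nxy := i1 _ _ hxy.
have claim : forall u v, H u v -> ~~ adjG u v -> u != v ->
    csep [set u] [set v] (bd gd gu [set u]) -> False.
  move=> u v huv nad nuv cs.
  have uS : u \notin bd gd gu [set u] by rewrite /bd in_set in_set1 eqxx.
  have vS : v \notin bd gd gu [set u].
    by apply/negP; rewrite /bd in_set => /andP [_ /existsP [a]]; rewrite in_set1 => /andP [/eqP ->];
       move: nad; rewrite /adjacent sym_u; case: (gd v u); case: (gu v u); rewrite ?orbT...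
  have ilt : #|bd gd gu [set u]| < #|T|.-1.
    have sb : bd gd gu [set u] \subset [set~ u] :\ v.
      apply/subsetP => z zb; rewrite !inE; apply/andP; split.
        by apply: contraNN vS => /eqP <-.
      by apply/eqP => e; subst z; rewrite zb in uS.
    have := subset_leq_card sb.
    have := cardsD1 v [set~ u]; rewrite cardsC1 !inE eq_sym nuv /= => e.
    have : 0 < #|[set~ u]| by apply/card_gt0P; exists v; rewrite !inE eq_sym.
    rewrite cardsC1; lia.
  have [[H' sep'] [[j1 j2 j3 j4] hno sub]] := hsub _ ilt.
  apply: hno; exists (remove_edge H' u v, set_sep sep' u v (bd gd gu [set u])).
  have sb : bd gd gu [set u] \subset adj_set H' u :\ v.
    apply/subsetP => z zb; rewrite !inE; apply/andP; split.
      by apply: contraNN vS => /eqP <-.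
    apply: j3; move: zb; rewrite /bd in_set => /andP [_ /existsP [a]].
    rewrite in_set1 => /andP [/eqP -> /orP [h|h]] /=; rewrite /adjacent ?h ?orbT //.
    by rewrite sym_u h !orbT.
  apply: SkStep => //; first exact: sub.
  - exact: subset_leq_card sb.
  - by apply/(CI_csep nuv uS vS).
case: (sep_exists nxy nadj) => cs.
  exact: (claim x y hxy nadj nxy cs).
apply: (claim y x) => //; [by rewrite i2 | by rewrite adj_sym | by rewrite eq_sym].
Qed.

Lemma csep_add u v (S : {set T}) w : csep [set u] [set v] S -> w \in bd gd gu [set u] ->
  csep [set u] [set v] (S :|: [set w]).
Proof.
move=> cs wb.
have eW : An ([set u] :|: [set v] :|: (S :|: [set w])) = An ([set u] :|: [set v] :|: S).
  apply: An_eq.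
    by apply: setUS; apply: subsetUl.
  apply/subsetP => z; rewrite !in_setU => /orP [/orP [h|h] | /orP [h|h]].
  - by apply: (subsetP (An_sub _)); rewrite !in_setU h.
  - by apply: (subsetP (An_sub _)); rewrite !in_setU h orbT.
  - by apply: (subsetP (An_sub _)); rewrite !in_setU h !orbT.
  - move: h; rewrite in_set1 => /eqP ->.
    apply: (@An_closed _ u).
      by apply: (subsetP (An_sub _)); rewrite !in_setU in_set1 eqxx.
    move: wb; rewrite /bd in_set => /andP [_ /existsP [a]].
    by rewrite in_set1 => /andP [/eqP ->].
rewrite /c_separates; cbv zeta; move=> a b ha hb; rewrite eW; have := cs a b ha hb.
have sub : An ([set u; v] :|: S) :\: (S :|: [set w]) \subset An ([set u; v] :|: S) :\: S.
  by apply: setDS; apply: subsetUl.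
apply: contraNN; apply: connect_sub => x y /= /and3P [hx hy m]; apply: connect1 => /=.
by rewrite m (subsetP sub _ hx) (subsetP sub _ hy).
Qed.


Lemma mem_zip1 (s t : seq T) x y : (x, y) \in zip s t -> x \in s /\ y \in t.
Proof.
elim: s t => [|a s IH] [|b t] //=; rewrite inE => /orP [/eqP [-> ->] | h].
  by rewrite !inE !eqxx.
by have [h1 h2] := IH _ h; rewrite !inE h1 h2 !orbT.
Qed.

Lemma consec_mem (vs : seq T) x y : consec vs x y -> x \in vs /\ y \in vs.
Proof.
case/hasP => [[e1 e2]] /mem_zip1 [h1 h2] /orP [] /eqP [? ?]; subst => /=.
  by split => //; apply: mem_behead.
by split => //; apply: mem_behead.
Qed.

Lemma consec_cons (z : T) s x y : consec s x y -> consec (z :: s) x y.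
Proof.
by case: s => [|w s] //= h; rewrite /consec /= orbC; move: h; rewrite /consec => ->.
Qed.

Lemma path_consec (x : T) s : path (consec (x :: s)) x s.
Proof.
elim: s x => [|w s IH] x //=; apply/andP; split.
  by rewrite /consec /= eqxx.
apply: sub_path (IH w) => a b; exact: consec_cons.
Qed.

Lemma path_sub_in (e e' : rel T) (P : pred T) x s :
  (forall a b, P a -> P b -> e a b -> e' a b) -> all P (x :: s) -> path e x s -> path e' x s.
Proof.
move=> h; elim: s x => [|y s IH] x //= /and3P [px py ps] /andP [exy pth].
by rewrite (h _ _ px py exy) IH //= py.
Qed.

Lemma take_not_last (y : T) p z : uniq (y :: p) -> z \in take (size p).-1 p ->
  z \in p /\ z != last y p.
Proof.
case/lastP: p => [|q l] //; rewrite size_rcons /= -cats1 take_size_cat //.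
rewrite cats1 last_rcons rcons_uniq mem_rcons inE => /andP [_ /andP [lq _]] zq.
by rewrite mem_rcons inE zq orbT; split => //; apply: contraNN lq => /eqP <-.
Qed.

Section CR.
Variables (H : rel T) (sep : T -> T -> {set T}) (ord : seq (T * T * T)) (A : rel T).
Hypothesis hsk : forall x y, H x y = adjG x y.
Hypothesis hinv : Inv (H, sep).
Hypothesis hord : cr_order H ord.
Hypothesis hrun : cr_run CI H sep (fun _ _ => false) ord A.

Lemma cr_mono A0 l A' : cr_run CI H sep A0 l A' -> forall x y, A0 x y -> A' x y.
Proof.
elim=> {A0 l A'} // A0 u v w l A' _ _ _ _ _ IH x y h.
by apply: IH; rewrite /add_arrow h.
Qed.

Lemma cr_sound A0 l A' : cr_run CI H sep A0 l A' -> (forall x y, A0 x y -> gd x y) ->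
  (forall t, t \in l -> [&& t.1.1 != t.1.2, ~~ H t.1.1 t.1.2 & H t.1.1 t.2]) ->
  forall x y, A' x y -> gd x y.
Proof.
elim=> {A0 l A'} // [A0 u v w l A' huw _ _ nci _ IH | A0 u v w l A' _ _ IH] h0 hl.
  apply: IH => [x y|t tl]; last by apply: hl; rewrite inE tl orbT.
  rewrite /add_arrow => /orP [/h0 //| /andP [/eqP -> /eqP ->]].
  have /and3P [/= nuv nH _] := hl (u, v, w) (mem_head _ _).
  case: hinv => _ _ _ /(_ u v nuv nH) /= [cs uS vS].
  move: (huw); rewrite hsk /adjacent => /or3P [// | h | h]; exfalso; apply: nci.
  - have wb : w \in bd gd gu [set u] by apply: bd_in; rewrite h.
    have nuw : u != w by apply: adj_neq; rewrite -hsk.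
    have nvw : v != w by apply: contraNN nH => /eqP ->.
    have hS1 : u \notin sep u v :|: [set w] by rewrite in_setU in_set1 negb_or uS nuw.
    have hS2 : v \notin sep u v :|: [set w] by rewrite in_setU in_set1 negb_or vS nvw.
    apply/(CI_csep nuv hS1 hS2); exact: csep_add.
  - have wb : w \in bd gd gu [set u] by apply: bd_in; rewrite sym_u h orbT.
    have nuw : u != w by apply: adj_neq; rewrite -hsk.
    have nvw : v != w by apply: contraNN nH => /eqP ->.
    have hS1 : u \notin sep u v :|: [set w] by rewrite in_setU in_set1 negb_or uS nuw.
    have hS2 : v \notin sep u v :|: [set w] by rewrite in_setU in_set1 negb_or vS nvw.
    apply/(CI_csep nuv hS1 hS2); exact: csep_add.
by apply: IH => // t tl; apply: hl; rewrite inE tl orbT.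
Qed.

Lemma A_gd x y : A x y -> gd x y.
Proof.
apply: (cr_sound hrun) => // t tl; case: hord => _ e; by rewrite -e.
Qed.

Lemma cr_complete A0 l A' : cr_run CI H sep A0 l A' -> (forall x y, A' x y -> gd x y) ->
  forall u v w, (u, v, w) \in l -> H u w -> gd u w ->
  ~ CI [set u] [set v] (sep u v :|: [set w]) -> A' u w.
Proof.
elim=> {A0 l A'} // [A0 u0 v0 w0 l A' _ _ _ _ run IH | A0 u0 v0 w0 l A' hn run IH] hA u v w.
  rewrite inE => /orP [/eqP [-> _ ->] | tl] huw duw nci; last by apply: (IH hA u v w).
  by apply: (cr_mono run); rewrite /add_arrow !eqxx orbT.
rewrite inE => /orP [/eqP [e1 e2 e3] | tl] huw duw nci; last by apply: (IH hA u v w).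
subst; case: (boolP (A0 u0 w0)) => [h|h]; first exact: (cr_mono run).
case: (boolP (A0 w0 u0)) => [h'|h'].
  by have := hA _ _ (cr_mono run h'); rewrite (dd duw).
by exfalso; apply: hn.
Qed.

Lemma connect_restrict (X : {set T}) y y' : y \in An X -> connect gu y y' ->
  y' \in An X /\ same_comp gu (An X) y y'.
Proof.
move=> yW /connectP [p pth ->] {y'}.
elim: p y yW pth => [|z p IH] y yW /=; first by rewrite /same_comp connect0.
case/andP => uyz pth.
have zW : z \in An X by apply: (An_closed yW); rewrite /stp sym_u uyz orbT.
have [h1 h2] := IH z zW pth; split => //.
apply: (connect_trans _ h2); apply: connect1 => /=.
by rewrite yW zW uyz.
Qed.

Lemma arrow_in_A x x' y y' : gd x y -> gd x' y' -> x != x' -> ~~ adjG x x' ->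
  connect gu y y' -> A x y.
Proof.
move=> dxy dxy' nxx' nadj cyy'.
have tin : (x, x', y) \in ord.
  case: hord => _ e; rewrite e /= nxx' !hsk nadj /adjacent dxy. done.
case: hinv => _ _ _ /(_ x x' nxx') /=; rewrite hsk nadj => /(_ isT) [cs xS x'S].
have nxy : x != y by apply: adj_neq; rewrite /adjacent dxy.
have nx'y : x' != y by apply: contraNN nadj => /eqP ->; rewrite /adjacent dxy.
apply: (cr_complete hrun A_gd tin); rewrite ?hsk /adjacent ?dxy //.
move=> /(CI_csep nxx'); rewrite !in_setU !in_set1 !negb_or xS x'S nxy nx'y => /(_ isT isT) h.
set S' := sep x x' :|: [set y] in h.
have := h x x' (set11 x) (set11 x'); apply/negP/negPn.
set W := An _.
have xW : x \in W by apply: (subsetP (An_sub _)); rewrite !in_setU in_set1 eqxx.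
have x'W : x' \in W by apply: (subsetP (An_sub _)); rewrite !in_setU !in_set1 eqxx orbT.
have yW : y \in W by apply: (subsetP (An_sub _)); rewrite !in_setU !in_set1 eqxx !orbT.
have [y'W sc] := connect_restrict yW cyy'.
have xS' : x \notin S' by rewrite /S' in_setU in_set1 negb_or xS nxy.
have x'S' : x' \notin S' by rewrite /S' in_setU in_set1 negb_or x'S nx'y.
apply: connect1 => /=; rewrite !in_setD xS' x'S' xW x'W /= /moral xW x'W nxx' /=.
apply/orP; right; apply/existsP; exists y; apply/existsP; exists y'.
by rewrite yW y'W dxy dxy'.
Qed.

Local Notation fd := (final_dir H A).
Local Notation fu := (final_und H A).

Lemma fd_A x y : fd x y -> A x y.
Proof. by case/andP. Qed.

Lemma fd_gd x y : fd x y -> gd x y.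
Proof. by move/fd_A/A_gd. Qed.

Lemma gu_sym_rel : symmetric gu.
Proof. by move=> x y; apply: sym_u. Qed.

Lemma C2 x x' y y' p : gd x y -> gd x' y' -> x != x' -> ~~ adjG x x' ->
  path gu y p -> last y p = y' -> uniq (y :: p) ->
  all (fun z => ~~ adjG x z && ~~ adjG x' z) (take (size p).-1 p) ->
  fd x y /\ fd x' y'.
Proof.
move=> dxy dxy' nxx' nadj pth lst up hall.
have cyy' : connect gu y y' by apply/connectP; exists p.
have Axy := arrow_in_A dxy dxy' nxx' nadj cyy'.
have Ax'y' : A x' y'.
  apply: (arrow_in_A dxy' dxy); rewrite 1?eq_sym 1?adj_sym //.
  by rewrite (sym_connect_sym gu_sym_rel).
have gp : good_upath H A x x' y y'.
  exists p; apply/and4P; split => //; last 1 first.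
  - by apply: sub_all hall => z /=; rewrite !hsk.
  - apply: (sub_path _ pth) => a b uab; rewrite /undir hsk /adjacent uab !orbT /=.
    apply/andP; split; apply/negP => /A_gd h.
      by rewrite (du h) in uab.
    by rewrite (du' h) in uab.
  - by rewrite lst.
split; rewrite /final_dir.
  rewrite Axy /=; case: excluded_middle_informative => // [] []; split => //.
  by exists x', y'; split => //; left.
rewrite Ax'y' /=; case: excluded_middle_informative => // [] []; split => //.
by exists x, y; split => //; [rewrite eq_sym | right].
Qed.

Lemma adj_final x y : adjacent fd fu x y = adjG x y.
Proof.
rewrite /final_und /undir /adjacent.
case e1: (fd x y); case e2: (fd y x) => /=; rewrite ?andbF ?andbT.
- by rewrite (fd_gd e1).
- by rewrite (fd_gd e1).
- by rewrite (fd_gd e2) orbT.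
- by rewrite hsk.
Qed.

Lemma gu_char x y : [&& adjG x y, ~~ gd x y & ~~ gd y x] = gu x y.
Proof.
rewrite /adjacent; case e1: (gd x y); case e2: (gd y x) => //=.
- by rewrite (du e1).
- by rewrite (du e1).
- by rewrite (du' e2).
- by rewrite !andbT.
Qed.

Lemma mc_back a b vs : min_complex gd gu a b vs -> min_complex fd fu a b vs.
Proof.
case: vs => [[]//|v p] [_ uq h].
move: (uq) => /= /andP [anot /andP [bnot uvp]].
have hin : {subset v :: p <= [:: a, b, v & p]}.
  by move=> z zin; rewrite in_cons in_cons zin !orbT.
have ain : a \in [:: a, b, v & p] by rewrite mem_head.
have bin : b \in [:: a, b, v & p] by rewrite in_cons mem_head orbT.
have za : forall z, z \in v :: p -> (z == a) = false.
  by move=> z zin; apply/negbTE; apply: contraNN anot => /eqP <-; rewrite in_cons zin orbT.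
have zb : forall z, z \in v :: p -> (z == b) = false.
  by move=> z zin; apply/negbTE; apply: contraNN bnot => /eqP <-.
have ab : (a == b) = false by apply/negbTE; apply: contraNN anot => /eqP ->; rewrite mem_head.
have ca : forall z, consec (v :: p) a z = false.
  by move=> z; apply/negbTE/negP => /consec_mem [/za]; rewrite eqxx.
have cb : forall z, consec (v :: p) b z = false.
  by move=> z; apply/negbTE/negP => /consec_mem [/zb]; rewrite eqxx.
have lin : last v p \in v :: p by apply: mem_last.
have vin : v \in v :: p by apply: mem_head.
have [fa fb] : fd a v /\ fd b (last v p).
  apply: (C2 (p := p)).
  - by rewrite (h a v ain (hin _ vin)).1 !eqxx.
  - by rewrite (h b (last v p) bin (hin _ lin)).1 !eqxx orbT.
  - by rewrite ab.
  - rewrite /adjacent (h a b ain bin).1 (h b a bin ain).1 (h a b ain bin).2 /=.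
    rewrite ab eqxx (eq_sym b v) (zb _ vin) (eq_sym b a) ab (eq_sym a (last v p)) (za _ lin).
    by rewrite ca !andbF.
  - apply: (@path_sub_in (consec (v :: p)) gu (fun z => z \in v :: p)).
    + by move=> x y hx hy c; rewrite (h x y (hin _ hx) (hin _ hy)).2.
    + by apply/allP.
    + exact: path_consec.
  - by [].
  - exact: uvp.
  - apply/allP => z zt; have [zp zl] := take_not_last uvp zt.
    have zin : z \in v :: p by rewrite in_cons zp orbT.
    have zv : (z == v) = false.
      by apply/negbTE; move: uvp => /= /andP [vp _]; apply: contraNN vp => /eqP <-.
    rewrite /adjacent (h a z ain (hin _ zin)).1 (h z a (hin _ zin) ain).1
      (h a z ain (hin _ zin)).2 (h b z bin (hin _ zin)).1 (h z b (hin _ zin) bin).1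
      (h b z bin (hin _ zin)).2 ca cb /=.
    rewrite (za _ zin) (zb _ zin) eqxx (eq_sym b a) ab zv (negbTE zl) /=.
    by rewrite !andbF.
have fdgd : forall x y, x \in [:: a, b, v & p] -> y \in [:: a, b, v & p] -> fd x y = gd x y.
  move=> x y hx hy; apply/idP/idP; first exact: fd_gd.
  by rewrite (h x y hx hy).1 => /orP [] /andP [/eqP -> /eqP ->].
split => // x y hx hy; split; first by rewrite fdgd // (h x y hx hy).1.
by rewrite /final_und /undir hsk !fdgd // -(h x y hx hy).2 gu_char.
Qed.

Section Fwd.
Variables (a b : T) (vs : seq T).
Hypothesis hmc : min_complex fd fu a b vs.

Definition fL := a :: rcons vs b.
Definition fn k := nth a fL k.
Local Notation n := (size vs).
Local Notation lst := [:: a, b & vs].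
Local Notation spec x y := (((x == a) && (y == head a vs)) || ((x == b) && (y == last b vs))).

Lemma nvs : 0 < n.
Proof. by case: hmc => ne _ _; rewrite lt0n size_eq0. Qed.

Lemma uL : uniq fL.
Proof. by case: hmc => _ uq _; move: uq; rewrite /fL /= rcons_uniq mem_rcons. Qed.

Lemma finj i j : i <= n.+1 -> j <= n.+1 -> (fn i == fn j) = (i == j).
Proof. by move=> hi hj; rewrite /fn; apply: nth_uniq; rewrite ?uL // /fL /= size_rcons. Qed.

Lemma fn0 : fn 0 = a. Proof. by []. Qed.
Lemma fnS : fn n.+1 = b. Proof. by rewrite /fn /fL /= nth_rcons ltnn eqxx. Qed.
Lemma fn_vs k : k < n -> fn k.+1 = nth a vs k.
Proof. by rewrite /fn /fL /= nth_rcons => ->. Qed.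
Lemma fn_head : head a vs = fn 1.
Proof. by rewrite fn_vs ?nvs // nth0. Qed.
Lemma fn_last : last b vs = fn n.
Proof.
have := nvs; case e: n => [|m] // _.
by rewrite fn_vs ?e // (set_nth_default b) ?e // -nth_last e.
Qed.

Lemma fn_mem k : k <= n.+1 -> fn k \in lst.
Proof.
move=> hk; have : fn k \in fL by apply: mem_nth; rewrite /fL /= size_rcons.
by rewrite /fL in_cons mem_rcons !in_cons => /orP [->|/orP [->|->]]; rewrite ?orbT.
Qed.

Lemma fn_ab k : 0 < k <= n -> (fn k == a) = false /\ (fn k == b) = false.
Proof. by move=> hk; rewrite -fn0 -fnS !finj //; lia. Qed.

Lemma spec_eval i j : i <= n.+1 -> j <= n.+1 ->
  spec (fn i) (fn j) = ((i == 0) && (j == 1)) || ((i == n.+1) && (j == n)).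
Proof.
by move=> hi hj; rewrite fn_head fn_last -{1}fn0 -{1}fnS !finj //; have := nvs; lia.
Qed.

Lemma consec_fn x y : consec vs x y -> exists2 k, 0 < k < n &
  ((x = fn k /\ y = fn k.+1) \/ (x = fn k.+1 /\ y = fn k)).
Proof.
case/hasP => [[e1 e2]] hz /orP [] /eqP [? ?]; subst;
  have [k hk [-> ->]] := zip_nth a hz;
  (have e1 : fn k.+1 = nth a vs k by apply: fn_vs; exact: ltnW hk);
  (have e2 : fn k.+2 = nth a vs k.+1 by apply: fn_vs; exact: hk);
  (exists k.+1; [by apply/andP; split | rewrite e1 e2; by [left | right]]).
Qed.

Lemma fn_consec k : 0 < k < n -> consec vs (fn k) (fn k.+1).
Proof.
case: k => // k /andP [_ hk]; apply/hasP; exists (fn k.+1, fn k.+2); last by rewrite eqxx.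
rewrite (fn_vs (ltnW hk)) (fn_vs hk); exact: nth_in_zip.
Qed.

Lemma hF1 x y : x \in lst -> y \in lst -> fd x y = spec x y.
Proof. by case: hmc => _ _ h hx hy; rewrite (h x y hx hy).1. Qed.

Lemma adj_spec x y : x \in lst -> y \in lst ->
  adjG x y = [|| spec x y, spec y x | consec vs x y].
Proof.
case: hmc => _ _ h hx hy.
by rewrite -adj_final /adjacent (h x y hx hy).1 (h y x hy hx).1 (h x y hx hy).2.
Qed.

Lemma adj_spec_fn i j : i <= n.+1 -> j <= n.+1 -> adjG (fn i) (fn j) =
  [|| ((i == 0) && (j == 1)) || ((i == n.+1) && (j == n)),
      ((j == 0) && (i == 1)) || ((j == n.+1) && (i == n)) | consec vs (fn i) (fn j)].
Proof.
by move=> hi hj; rewrite adj_spec; [rewrite !spec_eval | exact: fn_mem | exact: fn_mem].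
Qed.

Lemma adj_next k : k <= n -> adjG (fn k) (fn k.+1).
Proof.
move=> hk; rewrite adj_spec_fn //; last by apply: leqW.
case: (ltngtP k 0) => // [k0|->]; last by rewrite eqxx.
case: (ltngtP k n) => [kn | nk | ->]; [| lia | by rewrite !eqxx orbT].
by have := fn_consec (k := k); rewrite k0 kn => /(_ isT) ->; rewrite !orbT.
Qed.

Lemma nonadj i j : i <= n.+1 -> j <= n.+1 -> adjG (fn i) (fn j) -> (j == i.+1) || (i == j.+1).
Proof.
move=> hi hj; rewrite adj_spec_fn // => /or3P [h|h|/consec_fn [k hk]].
- by case/orP: h => /andP [/eqP -> /eqP ->]; rewrite ?eqxx ?orbT.
- by case/orP: h => /andP [/eqP -> /eqP ->]; rewrite ?eqxx ?orbT.
- case=> [] [/eqP e1 /eqP e2]; rewrite finj // in e1; rewrite finj // in e2; lia.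
Qed.

Local Notation R k := (gd (fn k) (fn k.+1)).
Local Notation Lp k := (gd (fn k.+1) (fn k)).

Lemma exRL k : R k -> Lp k -> False.
Proof. by move=> h1; rewrite (dd h1). Qed.

Lemma R0 : R 0.
Proof. by apply: fd_gd; rewrite hF1 ?fn_mem // spec_eval. Qed.

Lemma Ln : Lp n.
Proof. by apply: fd_gd; rewrite hF1 ?fn_mem // spec_eval // !eqxx orbT. Qed.

Lemma fdmid i y : 0 < i <= n -> y \in lst -> fd (fn i) y = false.
Proof. by move=> hi hy; rewrite hF1 ?fn_mem //; [have [-> ->] := fn_ab hi | lia]. Qed.

Lemma gu_between k : k <= n -> ~~ R k -> ~~ Lp k -> gu (fn k) (fn k.+1).
Proof.
move=> hk h1 h2; have := adj_next hk; rewrite /adjacent.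
by rewrite (negbTE h1) (negbTE h2).
Qed.

Lemma Pat i j : i < j <= n -> R i -> Lp j -> (forall k, i < k < j -> ~~ R k && ~~ Lp k) ->
  i = 0 /\ j = n.
Proof.
move=> hij Ri Lj hb.
set m := j - i.+1.
have [f1 f2] : fd (fn i) (fn i.+1) /\ fd (fn j.+1) (fn j).
  apply: (C2 (p := map fn (iota i.+2 m))) => //.
  - by rewrite finj; lia.
  - by apply/negP => /nonadj; lia.
  - apply: path_map_iota => k hk.
    have [h1 h2] : ~~ R k /\ ~~ Lp k by apply/andP; apply: hb; lia.
    apply: gu_between => //; lia.
  - by rewrite last_map_iota; congr fn; lia.
  - rewrite -[fn i.+1 :: _]/(map fn (iota i.+1 m.+1)) map_inj_in_uniq ?iota_uniq //.
    move=> x y; rewrite !mem_iota => hx hy e; apply/eqP; rewrite -finj; first by rewrite e.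
      lia.
    lia.
  - rewrite size_map size_iota -map_take take_iota all_map; apply/allP => k.
    rewrite mem_iota => hk /=; apply/andP; split; apply/negP => /nonadj; lia.
split.
  case: (posnP i) => // i0; have := fdmid (i := i) (y := fn i.+1); rewrite f1 => h.
  have h1 : 0 < i <= n by lia.
  have h2 : i.+1 <= n.+1 by lia.
  by have := h h1 (fn_mem h2).
case: (ltngtP j n) => // jn; first last.
  have := hij; lia.
have := fdmid (i := j.+1) (y := fn j); rewrite f2 => h.
have h1 : 0 < j.+1 <= n by lia.
have h2 : j <= n.+1 by lia.
by have := h h1 (fn_mem h2).
Qed.

Lemma main_gu k : 0 < k < n -> gu (fn k) (fn k.+1).
Proof.
move=> hk; have := adj_next (k := k) (ltac:(lia)); rewrite /adjacent => /or3P [Rk | Lk | //].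
  have [i' [j [h1 h2 h3 h4 h5]]] := scanR (P := fun k => R k) (Q := fun k => Lp k) Ln exRL
    (ltac:(lia) : k <= n) Rk.
  have [e _] := Pat h2 h3 h4 h5; lia.
have [i [j' [h1 h2 h3 h4 h5]]] := scanL (P := fun k => R k) (Q := fun k => Lp k) (n := n) R0 exRL
    (ltac:(lia) : k <= n) Lk.
have [_ e] := Pat h2 h3 h4 h5; lia.
Qed.

Lemma consec_gu x y : consec vs x y -> gu x y.
Proof.
case/consec_fn => k hk [[-> ->] | [-> ->]]; first exact: main_gu.
by rewrite sym_u; apply: main_gu.
Qed.

Lemma mc_fwd : min_complex gd gu a b vs.
Proof.
case: hmc => ne uq _; split => // x y hx hy.
have hs : forall x y, x \in lst -> y \in lst -> spec x y -> gd x y.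
  by move=> x' y' hx' hy' sp; apply: fd_gd; rewrite hF1.
split.
  apply/idP/idP => [dxy | /(hs x y hx hy) //].
  have := adj_gd dxy; rewrite adj_spec // => /or3P [// | /(hs y x hy hx) h | /consec_gu c].
    by rewrite (dd dxy) in h.
  by rewrite (du dxy) in c.
apply/idP/idP => [uxy | /consec_gu //].
have := adj_gu uxy; rewrite adj_spec // => /or3P [/(hs x y hx hy) h | /(hs y x hy hx) h | //].
  by rewrite (du h) in uxy.
by rewrite (du' h) in uxy.
Qed.

End Fwd.

End CR.

End Basic.

Theorem lemma2 (T : finType) (gd gu : rel T) (CI : ci_oracle T) :
  is_LWF_CG gd gu ->
  (forall A B S : {set T},
      [disjoint A & B] -> [disjoint A & S] -> [disjoint B & S] ->
      (CI A B S <-> c_separates gd gu A B S)) ->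
  forall (H : rel T) (sep : T -> T -> {set T}) (ord : seq (T * T * T)) (A : rel T),
    skeleton_run CI H sep ->
    cr_order H ord ->
    cr_run CI H sep (fun _ _ => false) ord A ->
    (forall x y, adjacent (final_dir H A) (final_und H A) x y = adjacent gd gu x y) /\
    (forall (a b : T) (vs : seq T),
        min_complex (final_dir H A) (final_und H A) a b vs <-> min_complex gd gu a b vs).
Proof.
move=> hCG hF H sep ord A run hord hrun.
have [hinv hsk] := skeleton_ok hCG hF run.
split.
  by move=> x y; apply: (adj_final hCG hF hsk hinv hord hrun).
move=> a b vs; split.
  exact: (mc_fwd hCG hF hsk hinv hord hrun).
exact: (mc_back hCG hF hsk hinv hord hrun).
Qed.
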